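(* Let $(X,d)$ be a metric space and $\Phi'_n,\Phi''_n:X\to X$, $n\in\mathbb{N}$, maps such that for constants $K>0$, $\theta<1$: $\mathrm{diam}(X)\le K$ and for all $n$ and $x_1,x_2\in X$, $d(\Phi'_n(x_1),\Phi'_n(x_2))\le\theta d(x_1,x_2)$ and $d(\Phi''_n(x_1),\Phi''_n(x_2))\le\theta d(x_1,x_2)$. Suppose there are constants $C>0$, $\kappa>0$ such that $d(\Phi'_n(x),\Phi''_n(x))\le C/n^\kappa$ for all $x\in X$ and $n\in\mathbb{N}$. Then there is a constant $\bar C$ such that for all $x',x''\in X$ and $n\in\mathbb{N}$, $$d\big(\Phi'_n\circ\cdots\circ\Phi'_1(x'),\ \Phi''_n\circ\cdots\circ\Phi''_1(x'')\big)\le\frac{\bar C}{n^\kappa}.$$ *)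

(* Defs.v *)
From Stdlib Require Export Reals.
Open Scope R_scope.

Fixpoint comp_maps {X : Type} (Phi : nat -> X -> X) (n : nat) (x : X) : X :=
  match n with
  | O => x
  | S m => Phi (S m) (comp_maps Phi m x)
  end.

(* Main.v *)
Require Import Defs.
From Stdlib Require Import Reals Lra Lia ZArith.
Open Scope R_scope.

Lemma ln_1px_le (x : R) : 0 < x -> ln (1 + x) <= x.
Proof.
  intro Hx. assert (H := exp_ineq1_le x).
  destruct (Rle_lt_or_eq_dec _ _ H) as [Hl|He].
  - left. pattern x at 2. rewrite <- (ln_exp x). apply ln_increasing; lra.
  - rewrite He, ln_exp. lra.
Qed.

Lemma rpow_pos (n : nat) k : 0 < Rpower (INR n) k.
Proof. unfold Rpower. apply exp_pos. Qed.

Lemma rpow_ratio (m : nat) k : (1 <= m)%nat -> 0 < k ->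
  Rpower (INR (S m)) k <= exp (k / INR m) * Rpower (INR m) k.
Proof.
  intros Hm Hk. assert (Hm' : 1 <= INR m) by (apply (le_INR 1); lia).
  unfold Rpower. rewrite <- exp_plus. 
  destruct (Rle_lt_or_eq_dec (k * ln (INR (S m))) (k / INR m + k * ln (INR m))) as [H|H].
  - rewrite S_INR.
    replace (INR m + 1) with (INR m * (1 + / INR m)) by (field; lra).
    rewrite ln_mult by (try apply Rlt_le_trans with 1; try lra;
       assert (0 < / INR m) by (apply Rinv_0_lt_compat; lra); lra).
    assert (ln (1 + / INR m) <= / INR m) by (apply ln_1px_le, Rinv_0_lt_compat; lra).
    unfold Rdiv. assert (k * ln (1 + / INR m) <= k * / INR m) by (apply Rmult_le_compat_l; lra).
    lra.
  - left; apply exp_increasing; exact H.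
  - right; f_equal; exact H.
Qed.

Theorem propositionC3 (M : Metric_Space)
  (Phi1 Phi2 : nat -> Base M -> Base M) (K theta C kappa : R) :
  0 < K -> theta < 1 ->
  (forall x y : Base M, dist M x y <= K) ->
  (forall (n : nat) (x1 x2 : Base M), (1 <= n)%nat ->
     dist M (Phi1 n x1) (Phi1 n x2) <= theta * dist M x1 x2) ->
  (forall (n : nat) (x1 x2 : Base M), (1 <= n)%nat ->
     dist M (Phi2 n x1) (Phi2 n x2) <= theta * dist M x1 x2) ->
  0 < C -> 0 < kappa ->
  (forall (n : nat) (x : Base M), (1 <= n)%nat ->
     dist M (Phi1 n x) (Phi2 n x) <= C / Rpower (INR n) kappa) ->
  exists Cbar : R, forall (x' x'' : Base M) (n : nat), (1 <= n)%nat ->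
    dist M (comp_maps Phi1 n x') (comp_maps Phi2 n x'') <= Cbar / Rpower (INR n) kappa.
Proof.
  intros HK Ht Hdiam H1 H2 HC Hk HD.
  set (t := Rmax theta 0).
  assert (Ht0 : 0 <= t) by apply Rmax_r.
  assert (Ht1 : t < 1) by (unfold t; apply Rmax_lub_lt; lra).
  assert (Htt : forall d, 0 <= d -> theta * d <= t * d)
    by (intros d Hd; apply Rmult_le_compat_r; [lra| apply Rmax_l]).
  set (delta := ln (2 / (1 + t))).
  assert (Hed : exp delta = 2 / (1 + t)) by (unfold delta; rewrite exp_ln;
    [reflexivity| apply Rdiv_lt_0_compat; lra]).
  assert (Hdel : 0 < delta).
  { apply exp_lt_inv. rewrite exp_0, Hed. apply Rlt_gt, Rmult_lt_reg_r with (1+t); [lra|].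
    field_simplify; lra. }
  destruct (archimed (kappa / delta)) as [HN _].
  set (N := Z.abs_nat (up (kappa / delta))).
  assert (HN' : kappa / delta < INR N).
  { unfold N. rewrite INR_IZR_INZ, Zabs2Nat.id_abs.
    assert (0 <= kappa / delta) by (apply Rlt_le, Rdiv_lt_0_compat; lra).
    assert (0 <= up (kappa / delta))%Z by (apply le_IZR; lra).
    rewrite Z.abs_eq by lia. lra. }
  set (P := Rpower (INR (N + 2)) kappa).
  set (B := Rmax (K * P) (C * (1 + t) / (1 - t))).
  exists B. intros x' x'' n Hn.
  induction n as [|m IH]; [lia|].
  assert (Hpos := rpow_pos (S m) kappa).
  destruct (le_lt_dec (S m) (N + 2)) as [Hs|Hs].
  - apply Rle_trans with K; [apply Hdiam|].
    apply Rle_trans with (K * P / Rpower (INR (S m)) kappa).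
    + apply Rmult_le_reg_r with (Rpower (INR (S m)) kappa); [lra|].
      field_simplify; [|lra]. apply Rmult_le_compat_l; [lra|].
      apply Rle_Rpower_l; [lra|split; [apply lt_0_INR; lia| apply le_INR; lia]].
    + unfold Rdiv. apply Rmult_le_compat_r; [left; apply Rinv_0_lt_compat; lra| apply Rmax_l].
  - assert (Hm1 : (1 <= m)%nat) by lia.
    specialize (IH Hm1).
    assert (Hmpos := rpow_pos m kappa).
    simpl comp_maps.
    set (a := comp_maps Phi1 m x') in *. set (b := comp_maps Phi2 m x'') in *.
    assert (Htri := dist_tri M (Phi1 (S m) a) (Phi2 (S m) b) (Phi1 (S m) b)).
    assert (Hc1 := H1 (S m) a b ltac:(lia)).
    assert (Hd := HD (S m) b ltac:(lia)).
    assert (Hab := dist_pos M a b).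
    assert (Htb := Htt (dist M a b) ltac:(lra)).
    assert (Hrat := rpow_ratio m kappa Hm1 Hk).
    assert (HmR : INR N < INR m) by (apply lt_INR; lia).
    assert (Hkm : kappa / INR m < delta).
    { assert (HN0 := pos_INR N).
      assert (Hk1 : kappa < delta * INR m).
      { replace kappa with (delta * (kappa / delta)) by (field; lra).
        apply Rmult_lt_compat_l; lra. }
      apply Rmult_lt_reg_r with (INR m); [lra|].
      replace (kappa / INR m * INR m) with kappa by (field; lra). lra. }
    assert (Hexp : exp (kappa / INR m) <= 2 / (1 + t)) by (rewrite <- Hed; left; apply exp_increasing; lra).
    assert (HB0 : 0 <= B) by (apply Rle_trans with (K * P); [apply Rmult_le_pos; [lra| left; apply rpow_pos]| apply Rmax_l]).
    assert (HBC : C * (1 + t) / (1 - t) <= B) by apply Rmax_r.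
    assert (Hstep : t * (B / Rpower (INR m) kappa) <= (2 * t / (1 + t)) * B / Rpower (INR (S m)) kappa).
    { apply Rmult_le_reg_r with (Rpower (INR (S m)) kappa * Rpower (INR m) kappa * (1 + t)).
      - apply Rmult_lt_0_compat; [apply Rmult_lt_0_compat|]; lra.
      - field_simplify; try lra.
        assert (Hq : Rpower (INR (S m)) kappa <= 2 / (1 + t) * Rpower (INR m) kappa).
        { apply Rle_trans with (1 := Hrat). apply Rmult_le_compat_r; lra. }
        assert (t * B * (1 + t) * Rpower (INR (S m)) kappa <= t * B * (1 + t) * (2 / (1 + t) * Rpower (INR m) kappa)).
        { apply Rmult_le_compat_l; [|exact Hq]. apply Rmult_le_pos; [apply Rmult_le_pos|]; lra. }
        replace (t * B * (1 + t) * (2 / (1 + t) * Rpower (INR m) kappa)) with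
          (2 * t * B * Rpower (INR m) kappa) in H by (field; lra).
        lra. }
    assert (HtIH : t * dist M a b <= t * (B / Rpower (INR m) kappa)) by (apply Rmult_le_compat_l; lra).
    assert (Hfin : 2 * t / (1 + t) * B / Rpower (INR (S m)) kappa + C / Rpower (INR (S m)) kappa
                   <= B / Rpower (INR (S m)) kappa).
    { apply Rmult_le_reg_r with (Rpower (INR (S m)) kappa * (1 + t)).
      - apply Rmult_lt_0_compat; lra.
      - field_simplify; try lra.
        assert (C * (1 + t) <= B * (1 - t)).
        { apply Rmult_le_reg_r with (/ (1 - t)). apply Rinv_0_lt_compat; lra.
          replace (B * (1 - t) * / (1 - t)) with B by (field; lra). unfold Rdiv in HBC. lra. }
        lra. }
    lra.
Qed.
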